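(* Let $G_1,\dots,G_k$ ($k>1$) be connected graphs with at least one edge each, and let $G$ be any coalescence of $G_1,\dots,G_k$. Let $f:\mathbb{R}\to\mathbb{R}$ with $f(0)=0$. Then $f[-]$ preserves positivity on $\mathcal{P}_G(\mathbb{R})$ if and only if (1) $f[-]$ preserves positivity on each $\mathcal{P}_{G_i}(\mathbb{R})$, and (2) $f$ is continuous and super-additive on $[0,\infty)$. In particular, for any $\alpha\in\mathbb{R}$, $\psi_\alpha$ (resp. $\phi_\alpha$) preserves positivity on $\mathcal{P}_G(\mathbb{R})$ if and only if it does so on $\mathcal{P}_{G_i}(\mathbb{R})$ for all $1\le i\le k$ and $\alpha\ge1$; that is, \[ \mathcal{H}^\psi_G=[1,\infty)\cap\bigcap_{i=1}^k\mathcal{H}^\psi_{G_i},\qquad \mathcal{H}^\phi_G=[1,\infty)\cap\bigcap_{i=1}^k\mathcal{H}^\phi_{G_i}. \]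
   Context: Graphs are finite and simple. A coalescence of two graphs $H_1,H_2$ is the graph obtained from their disjoint union by identifying a vertex of $H_1$ with a vertex of $H_2$; a coalescence of $G_1,\dots,G_k$ is obtained iteratively by coalescing a coalescence of $G_1,\dots,G_{i-1}$ with $G_i$. Super-additive on $[0,\infty)$ means $f(x+y)\ge f(x)+f(y)$ for $x,y\ge0$. For a graph $H$ on $\{1,\dots,n\}$, $\mathcal{P}_H(\mathbb{R})$ is the set of real symmetric PSD $n\times n$ matrices $M$ with $m_{ij}=0$ whenever $i\ne j$ and $(i,j)$ is not an edge. $f[M]=(f(m_{ij}))$; $f[-]$ preserves positivity on $\mathcal{P}_H(\mathbb{R})$ if $f[M]\in\mathcal{P}_H(\mathbb{R})$ for all $M\in\mathcal{P}_H(\mathbb{R})$. $\psi_\alpha(x)=\mathrm{sgn}(x)|x|^\alpha$, $\phi_\alpha(x)=|x|^\alpha$ ($x\ne0$), $\psi_\alpha(0)=\phi_\alpha(0)=0$; $\mathcal{H}_H^\psi$ (resp. $\mathcal{H}_H^\phi$) is the set of $\alpha\in\mathbb{R}$ such that $\psi_\alpha[-]$ (resp. $\phi_\alpha[-]$) preserves positivity on $\mathcal{P}_H(\mathbb{R})$. *)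

(* Defs.v *)
From HB Require Import structures.
From mathcomp Require Import all_boot all_order all_algebra.
From mathcomp Require Import all_classical all_reals all_analysis.

Set Implicit Arguments.
Unset Strict Implicit.
Unset Printing Implicit Defensive.

Import Order.TTheory GRing.Theory Num.Theory.
Local Open Scope ring_scope.
Import numFieldNormedType.Exports.
Local Open Scope classical_set_scope.

Record graph := Graph {
  gn : nat;
  gadj : rel 'I_gn;
  gadj_sym : forall x y, gadj x y = gadj y x;
  gadj_irr : forall x, gadj x x = false
}.

Arguments gadj : clear implicits.

Definition connected_graph (G : graph) : Prop :=
  forall x y : 'I_(gn G), connect (gadj G) x y.

Definition has_edge (G : graph) : Prop :=
  exists x y : 'I_(gn G), gadj G x y.

(* G is (isomorphic to) the graph obtained from the disjoint union of H1 and H2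
   by identifying a vertex v1 of H1 with a vertex v2 of H2:
   p, q embed H1, H2 into G, cover G, overlap exactly at p v1 = q v2,
   and the edges of G are exactly the images of the edges of H1 and H2. *)
Definition coalescence2 (H1 H2 G : graph) : Prop :=
  exists (v1 : 'I_(gn H1)) (v2 : 'I_(gn H2))
         (p : 'I_(gn H1) -> 'I_(gn G)) (q : 'I_(gn H2) -> 'I_(gn G)),
    [/\ injective p, injective q,
        (forall x y, p x = q y <-> (x = v1 /\ y = v2)),
        (forall z, (exists x, p x = z) \/ (exists y, q y = z)) &
        (forall a b, gadj G a b <->
           ((exists x y, [/\ p x = a, p y = b & gadj H1 x y]) \/
            (exists x y, [/\ q x = a, q y = b & gadj H2 x y])))].

(* coalescence Gs i G : G is a coalescence of Gs 0, ..., Gs i, built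
   iteratively by coalescing a coalescence of Gs 0..Gs (i-1) with Gs i. *)
Inductive coalescence (Gs : nat -> graph) : nat -> graph -> Prop :=
| coal0 : coalescence Gs 0 (Gs 0)
| coalS i H G : coalescence Gs i H -> coalescence2 H (Gs i.+1) G ->
                coalescence Gs i.+1 G.

Definition psd (R : realType) n (A : 'M[R]_n) : Prop :=
  A^T = A /\ forall v : 'cV[R]_n, 0 <= (v^T *m A *m v) 0 0.

Definition PG (R : realType) (G : graph) (A : 'M[R]_(gn G)) : Prop :=
  psd A /\ forall i j, i != j -> ~~ gadj G i j -> A i j = 0.

Definition preserves_positivity (R : realType) (f : R -> R) (G : graph) : Prop :=
  forall A : 'M[R]_(gn G), PG A -> PG (map_mx f A).

Definition superadditive_nonneg (R : realType) (f : R -> R) : Prop :=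
  forall x y : R, 0 <= x -> 0 <= y -> f x + f y <= f (x + y).

Definition continuous_nonneg (R : realType) (f : R -> R) : Prop :=
  {within [set x : R | 0 <= x], continuous f}.

Definition psi (R : realType) (a : R) (x : R) : R :=
  if x == 0 then 0 else Num.sg x * powR `|x| a.

Definition phi (R : realType) (a : R) (x : R) : R :=
  if x == 0 then 0 else powR `|x| a.

(* Main.v *)
Require Import Defs.
From HB Require Import structures.
From mathcomp Require Import all_boot all_order all_algebra.
From mathcomp Require Import all_classical all_reals all_analysis.
From mathcomp Require Import ring lra zify.
Import Order.TTheory GRing.Theory Num.Theory.
Import numFieldNormedType.Exports.
Local Open Scope ring_scope.
Set Implicit Arguments.
Unset Strict Implicit.
Unset Printing Implicit Defensive.

Section PSD.
Variable R : realType.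

Definition qf n (A : 'M[R]_n) (v : 'cV[R]_n) : R := (v^T *m A *m v) 0 0.

Lemma qfE n (A : 'M[R]_n) v :
  qf A v = \sum_i \sum_j v i 0 * A i j * v j 0.
Proof.
rewrite /qf mxE.
under eq_bigr => j _ do rewrite mxE big_distrl /=.
rewrite exchange_big /=; apply: eq_bigr => i _; apply: eq_bigr => j _.
by rewrite !mxE.
Qed.

Lemma qfD n (A B : 'M[R]_n) v : qf (A + B) v = qf A v + qf B v.
Proof. by rewrite /qf mulmxDr mulmxDl mxE. Qed.

Lemma qfZ n (a : R) (A : 'M[R]_n) v : qf (a *: A) v = a * qf A v.
Proof. by rewrite /qf -scalemxAr -scalemxAl mxE. Qed.

Lemma qfvZ n (a : R) (A : 'M[R]_n) v : qf A (a *: v) = a ^+ 2 * qf A v.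
Proof.
rewrite /qf; have -> : (a *: v)^T = a *: v^T by apply/matrixP => i j; rewrite !mxE.
rewrite -!scalemxAl -scalemxAr !mxE; ring.
Qed.

Lemma qf_delta n (A : 'M[R]_n) c : qf A (delta_mx c 0) = A c c.
Proof. by rewrite /qf trmx_delta -rowE -colE !mxE. Qed.

Lemma qf_deltamx n (c : 'I_n) v : qf (delta_mx c c) v = v c 0 ^+ 2.
Proof.
rewrite /qf -(mul_delta_mx (0 : 'I_1)) !mulmxA -colE -mulmxA -rowE.
by rewrite !mxE big_ord1 !mxE expr2.
Qed.

Lemma qf0v n (A : 'M[R]_n) : qf A 0 = 0.
Proof. by rewrite /qf mulmx0 mxE. Qed.

Lemma psd_congr m n (A : 'M[R]_n) (M : 'M[R]_(m, n)) :
  psd A -> psd (M *m A *m M^T).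
Proof.
move=> [As Ap]; split.
  by rewrite !trmx_mul trmxK As mulmxA.
move=> v; have := Ap (M^T *m v).
by rewrite trmx_mul trmxK !mulmxA.
Qed.

Lemma psdD n (A B : 'M[R]_n) : psd A -> psd B -> psd (A + B).
Proof.
move=> [As Ap] [Bs Bp]; split; first by rewrite linearD /= As Bs.
by move=> v; change (0 <= qf (A + B) v); rewrite qfD addr_ge0 //; [apply: Ap|apply: Bp].
Qed.

Lemma psdZ n (a : R) (A : 'M[R]_n) : 0 <= a -> psd A -> psd (a *: A).
Proof.
move=> a0 [As Ap]; split; first by rewrite linearZ /= As.
by move=> v; change (0 <= qf (a *: A) v); rewrite qfZ mulr_ge0 //; apply: Ap.
Qed.

Lemma psd_delta n (c : 'I_n) : psd (delta_mx c c : 'M[R]_n).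
Proof.
split; first by rewrite trmx_delta.
by move=> v; change (0 <= qf (delta_mx c c) v); rewrite qf_deltamx sqr_ge0.
Qed.

Lemma psd_qf n (A : 'M[R]_n) v : psd A -> 0 <= qf A v.
Proof. by case=> _; apply. Qed.

Lemma psd_diag n (A : 'M[R]_n) c : psd A -> 0 <= A c c.
Proof. by move=> H; rewrite -qf_delta; apply: psd_qf. Qed.

End PSD.

Section Emb.
Variable R : realType.
Variables (m n : nat) (e : 'I_m -> 'I_n).
Hypothesis einj : injective e.

Definition Pm : 'M[R]_(m, n) := \matrix_(x, i) (e x == i)%:R.
Definition res (M : 'M[R]_n) : 'M[R]_m := Pm *m M *m Pm^T.
Definition ext (M : 'M[R]_m) : 'M[R]_n := Pm^T *m M *m Pm.

Lemma sum_sel (F : 'I_m -> R) i :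
  \sum_x (e x == i)%:R * F x = if [pick x | e x == i] is Some x then F x else 0.
Proof.
case: pickP => [x /eqP exi|none].
  rewrite (bigD1 x) //= exi eqxx mul1r big1 ?addr0 // => y yx.
  by rewrite -exi (inj_eq einj) (negbTE yx) mul0r.
by rewrite big1 // => y _; rewrite none mul0r.
Qed.

Lemma sum_selr (F : 'I_m -> R) i :
  \sum_x F x * (e x == i)%:R = if [pick x | e x == i] is Some x then F x else 0.
Proof. by rewrite -sum_sel; apply: eq_bigr => x _; rewrite mulrC. Qed.

Lemma pick_e x : [pick y | e y == e x] = Some x.
Proof.
case: pickP => [y /eqP /einj -> //|/(_ x)]; by rewrite eqxx.
Qed.

Lemma extE M i j : ext M i j =
  if [pick x | e x == i] is Some x then
    (if [pick y | e y == j] is Some y then M x y else 0) else 0.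
Proof.
rewrite /ext mxE.
under eq_bigr => y _ do rewrite mxE mxE.
under eq_bigr => y _ do under eq_bigr => x _ do rewrite mxE.
under eq_bigr => y _ do under eq_bigr => x _ do rewrite mxE.
under eq_bigr => y _ do rewrite sum_sel.
rewrite sum_selr.
by case: [pick x | e x == i]; case: [pick y | e y == j].
Qed.

Lemma ext_ee M x y : ext M (e x) (e y) = M x y.
Proof. by rewrite extE !pick_e. Qed.

Lemma sum_at (F : 'I_n -> R) k : \sum_i (k == i)%:R * F i = F k.
Proof.
rewrite (bigD1 k) //= eqxx mul1r big1 ?addr0 // => i ik.
by rewrite eq_sym (negbTE ik) mul0r.
Qed.

Lemma resE M x y : res M x y = M (e x) (e y).
Proof.
rewrite /res mxE.
under eq_bigr => j _ do rewrite mxE mxE.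
under eq_bigr => j _ do under eq_bigr => i _ do rewrite mxE.
under eq_bigr => j _ do rewrite (sum_at (fun i => M i j)) mxE mulrC.
exact: (sum_at (fun j => M (e x) j)).
Qed.

Lemma res_ext M : res (ext M) = M.
Proof. by apply/matrixP => x y; rewrite resE ext_ee. Qed.

Lemma ext0 M i j : (forall x, e x != i) \/ (forall x, e x != j) -> ext M i j = 0.
Proof.
rewrite extE => -[H|H].
  by case: pickP => // x; rewrite (negbTE (H x)).
case: pickP => // x _; case: pickP => // y; by rewrite (negbTE (H y)).
Qed.

Lemma map_ext (f : R -> R) M : f 0 = 0 -> map_mx f (ext M) = ext (map_mx f M).
Proof.
move=> f0; apply/matrixP => i j; rewrite mxE !extE.
case: pickP => [x _|_] //; case: pickP => [y _|_] //; by rewrite mxE.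
Qed.

Lemma ext_res (M : 'M[R]_n) : (forall i j, (forall x, e x != i) \/ (forall x, e x != j) -> M i j = 0) ->
  ext (res M) = M.
Proof.
move=> H; apply/matrixP => i j; rewrite extE.
case: pickP => [x /eqP <-|none]; last by rewrite H //; left => z; rewrite none.
case: pickP => [y /eqP <-|none]; last by rewrite H //; right => z; rewrite none.
by rewrite resE.
Qed.

Lemma psd_res M : psd M -> psd (res M).
Proof. exact: psd_congr. Qed.

Lemma psd_ext M : psd M -> psd (ext M).
Proof. by move=> H; rewrite /ext -[X in _ *m X]trmxK; apply: psd_congr. Qed.

End Emb.

Definition emb (H G : graph) (e : 'I_(gn H) -> 'I_(gn G)) :=
  injective e /\ forall x y, gadj G (e x) (e y) = gadj H x y.
Arguments emb : clear implicits.

Lemma pres_emb (R : realType) (f : R -> R) H G e : f 0 = 0 -> emb H G e ->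
  preserves_positivity f G -> preserves_positivity f H.
Proof.
move=> f0 [ei eadj] pG A [Apsd Apat].
have PGe : PG (ext e A).
  split; first exact: psd_ext.
  move=> i j ij nadj; rewrite (extE ei).
  case: pickP => [x /eqP exi|] //; case: pickP => [y /eqP eyj|] //.
  apply: Apat; first by apply: contraNneq ij => xy; rewrite -exi -eyj xy.
  by rewrite -eadj exi eyj.
have [Hpsd _] := pG _ PGe.
rewrite (map_ext ei _ f0) in Hpsd.
split; first by rewrite -(res_ext ei (map_mx f A)); apply: psd_res.
by move=> i j ij nadj; rewrite mxE Apat.
Qed.

Lemma emb_comp H G K e e' : emb H G e -> emb G K e' -> emb H K (e' \o e).
Proof.
move=> [ei ea] [ei' ea']; split; first exact: inj_comp.
by move=> x y /=; rewrite ea' ea.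
Qed.

Lemma emb_id G : emb G G id.
Proof. by split. Qed.

Lemma irr_neq G x y : gadj G x y -> x != y.
Proof. by apply: contraTneq => ->; rewrite gadj_irr. Qed.

Definition adj3 (x y : 'I_3) : bool := ((x + y == 1) || (x + y == 3))%N.
Lemma adj3_sym x y : adj3 x y = adj3 y x.
Proof. by rewrite /adj3 addnC. Qed.
Lemma adj3_irr x : adj3 x x = false.
Proof. by case: x => [[|[|[|x]]] Hx]. Qed.
Definition P3 : graph := Graph adj3_sym adj3_irr.

Section Coal2.
Variables H1 H2 G : graph.
Variables (v1 : 'I_(gn H1)) (v2 : 'I_(gn H2)) (p : 'I_(gn H1) -> 'I_(gn G))
  (q : 'I_(gn H2) -> 'I_(gn G)).
Hypotheses (pi : injective p) (qi : injective q)
  (pq : forall x y, p x = q y <-> (x = v1 /\ y = v2))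
  (cov : forall z, (exists x, p x = z) \/ (exists y, q y = z))
  (adj : forall a b, gadj G a b <->
           ((exists x y, [/\ p x = a, p y = b & gadj H1 x y]) \/
            (exists x y, [/\ q x = a, q y = b & gadj H2 x y]))).

Lemma emb_p : emb H1 G p.
Proof.
split => // x y; apply/idP/idP => [/adj [[x' [y' [/pi-> /pi-> //]]]|]|H].
  by move=> [x' [y' [/esym/pq [-> ->] /esym/pq [-> ->] ]]]; rewrite gadj_irr.
by apply/adj; left; exists x, y.
Qed.

Lemma emb_q : emb H2 G q.
Proof.
split => // x y; apply/idP/idP => [/adj [|[x' [y' [/qi-> /qi-> //]]]]|H].
  by move=> [x' [y' [/pq [-> ->] /pq [-> ->] ]]]; rewrite gadj_irr.
by apply/adj; right; exists x, y.
Qed.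

Definition no_iso (H : graph) := forall x : 'I_(gn H), exists y, gadj H x y.

Lemma coal2_P3 : no_iso H1 -> no_iso H2 -> exists e, emb P3 G e.
Proof.
move=> n1 n2; have [u vu] := n1 v1; have [w vw] := n2 v2.
have uv : u != v1 by rewrite eq_sym; apply: irr_neq vu.
have wv : w != v2 by rewrite eq_sym; apply: irr_neq vw.
have [_ pa] := emb_p; have [_ qa] := emb_q.
have c : p v1 = q v2 by apply/pq.
have K1 : p u <> p v1 by move/pi/eqP; rewrite (negbTE uv).
have K2 : p u <> q w by move/pq => [/eqP]; rewrite (negbTE uv).
have K3 : p v1 <> q w by move/pq => [_ /eqP]; rewrite (negbTE wv).
have nuw : gadj G (p u) (q w) = false.
  apply/negbTE/negP => /adj [[x [y [/pi -> /pq [_ /eqP] ]]]|[x [y [/esym/pq [/eqP] ]]]].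
    by rewrite (negbTE wv).
  by rewrite (negbTE uv).
exists (fun i : 'I_3 => match val i with 0 => p u | 1 => p v1 | _ => q w end).
split.
  move=> [[|[|[|i]]] Hi] [[|[|[|j]]] Hj] /= Exy; try by apply/val_inj.
  all: try by move: Hi.
  all: try by move: Hj.
    all: try by match goal with H : _ = _ |- _ => move/esym: H end.
move=> [[|[|[|i]]] Hi] [[|[|[|j]]] Hj] /=; rewrite ?gadj_irr //.
all: try by move: Hi.
all: try by move: Hj.
- by rewrite pa gadj_sym.
- by rewrite pa.
- by rewrite c qa.
- by rewrite gadj_sym.
- by rewrite c qa gadj_sym.
Qed.

End Coal2.


Lemma coal_emb Gs i H : coalescence Gs i H ->
  forall j, (j <= i)%N -> exists e, emb (Gs j) H e.
Proof.
elim=> [|{}i H' G' cH IH [v1 [v2 [p [q [pi qi pq cov adj]]]]]] j ji.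
  by move: ji; rewrite leqn0 => /eqP ->; exists id; exact: emb_id.
have ep := emb_p pi pq adj; have eq := emb_q qi pq adj.
move: ji; rewrite leq_eqVlt => /orP [/eqP ->|]; first by exists q.
rewrite ltnS => /IH [e He]; exists (p \o e); exact: emb_comp He ep.
Qed.

Lemma conn_noiso H : connected_graph H -> has_edge H -> no_iso H.
Proof.
move=> cH [a [b ab]] x.
have [z xz] : exists z, x != z.
  case: (eqVneq x a) => [xa|]; last by exists a.
  by exists b; rewrite xa; apply: irr_neq ab.
have /connectP [[|z' s] /= ps zl] := cH x z; first by rewrite zl eqxx in xz.
by move/andP: ps => [xz' _]; exists z'.
Qed.

Lemma coal_noiso Gs i H : coalescence Gs i H ->
  (forall j, (j <= i)%N -> no_iso (Gs j)) -> no_iso H.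
Proof.
elim=> [|{}i H' G' cH IH [v1 [v2 [p [q [pi qi pq cov adj]]]]]] N; first exact: N.
have [_ pa] := emb_p pi pq adj; have [_ qa] := emb_q qi pq adj.
move=> z; case: (cov z) => [[x <-]|[y <-]].
  have [x' xx'] := IH (fun j ji => N j (leqW ji)) x.
  by exists (p x'); rewrite pa.
have [y' yy'] := N i.+1 (leqnn _) y.
by exists (q y'); rewrite qa.
Qed.

Section Dec.
Variable R : realType.
Variable f : R -> R.
Hypothesis f0 : f 0 = 0.
Hypothesis sa : superadditive_nonneg f.
Variables H1 H2 G : graph.
Hypothesis pr1 : preserves_positivity f H1.
Hypothesis pr2 : preserves_positivity f H2.
Variables (v1 : 'I_(gn H1)) (v2 : 'I_(gn H2)) (p : 'I_(gn H1) -> 'I_(gn G))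
  (q : 'I_(gn H2) -> 'I_(gn G)).
Hypotheses (pi : injective p) (qi : injective q)
  (pq : forall x y, p x = q y <-> (x = v1 /\ y = v2))
  (cov : forall z, (exists x, p x = z) \/ (exists y, q y = z))
  (adj : forall a b, gadj G a b <->
           ((exists x y, [/\ p x = a, p y = b & gadj H1 x y]) \/
            (exists x y, [/\ q x = a, q y = b & gadj H2 x y]))).

Let n := gn G.
Let c := p v1.
Definition I1 (i : 'I_n) := [exists x, p x == i].
Definition I2 (i : 'I_n) := [exists y, q y == i].

Lemma I12 i : I1 i -> I2 i -> i = c.
Proof.
move=> /existsP [x /eqP <-] /existsP [y /eqP /esym /pq [-> _]] //.
Qed.

Lemma Ior i : I1 i || I2 i.
Proof.
by case: (cov i) => [[x <-]|[y <-]]; apply/orP; [left|right]; apply/existsP;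
  [exists x|exists y].
Qed.

Lemma I1c : I1 c. Proof. by apply/existsP; exists v1. Qed.
Lemma I2c : I2 c. Proof. by apply/existsP; exists v2; apply/eqP/esym/pq. Qed.

Variable A : 'M[R]_n.
Hypothesis AP : PG A.

Lemma Asym i j : A i j = A j i.
Proof. by case: AP => [[As _] _]; rewrite -{1}As mxE. Qed.

Lemma crosszero i j : ~~ (I1 i && I1 j) -> ~~ (I2 i && I2 j) -> A i j = 0.
Proof.
move=> h1 h2; case: AP => _ Apat; apply: Apat.
  apply/eqP => ij; subst j; move: h1 h2; rewrite !andbb.
  by case/orP: (Ior i) => ->.
apply/negP => /adj [[x [y [px py _]]]|[x [y [qx qy _]]]].
  by move: h1; rewrite -px -py; case/negP; apply/andP; split; apply/existsP;
    [exists x|exists y].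
by move: h2; rewrite -qx -qy; case/negP; apply/andP; split; apply/existsP;
  [exists x|exists y].
Qed.

Definition A1 : 'M[R]_n := \matrix_(i, j)
  if [&& I1 i, I1 j & ~~ ((i == c) && (j == c))] then A i j else 0.
Definition A2 : 'M[R]_n := \matrix_(i, j)
  if [&& I2 i, I2 j & ~~ ((i == c) && (j == c))] then A i j else 0.
Let al := A c c.

Lemma A12 i j : A1 i j = 0 \/ A2 i j = 0.
Proof.
rewrite !mxE; case: ifP => [/and3P [h1 h1' nc]|]; last by left.
case: ifP => [/and3P [h2 h2' _]|]; last by right.
by move: nc; rewrite (I12 h1 h2) (I12 h1' h2') eqxx.
Qed.

Lemma Adec : A = A1 + A2 + al *: delta_mx c c.
Proof.
apply/matrixP => i j; rewrite !mxE.
case: (boolP ((i == c) && (j == c))) => [/andP [/eqP -> /eqP ->]|nc].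
  by rewrite !andbF mulr1 !add0r.
rewrite /= mulr0 addr0 !andbT.
case: ifP => h1; case: ifP => h2.
- by move/andP: h1 => [a b]; move/andP: h2 => [a' b']; move: nc;
    rewrite (I12 a a') (I12 b b') eqxx.
- by rewrite addr0.
- by rewrite add0r.
- by rewrite addr0 crosszero ?h1 ?h2.
Qed.

Lemma qfA v : qf A v = qf A1 v + qf A2 v + al * v c 0 ^+ 2.
Proof. by rewrite {1}Adec !qfD qfZ qf_deltamx. Qed.

Lemma loc1 (u v : 'cV[R]_n) : (forall i, I1 i -> u i 0 = v i 0) -> qf A1 u = qf A1 v.
Proof.
move=> E; rewrite !qfE; apply: eq_bigr => i _; apply: eq_bigr => j _.
rewrite mxE; case: ifP => [/and3P [h1 h2 _]|_]; first by rewrite E ?(E j).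
by rewrite !mulr0 !mul0r.
Qed.

Lemma loc2 (u v : 'cV[R]_n) : (forall i, I2 i -> u i 0 = v i 0) -> qf A2 u = qf A2 v.
Proof.
move=> E; rewrite !qfE; apply: eq_bigr => i _; apply: eq_bigr => j _.
rewrite mxE; case: ifP => [/and3P [h1 h2 _]|_]; first by rewrite E ?(E j).
by rewrite !mulr0 !mul0r.
Qed.

Lemma comb (u w : 'cV[R]_n) : u c 0 = w c 0 -> 0 <= qf A1 u + qf A2 w + al * u c 0 ^+ 2.
Proof.
move=> uw.
pose v : 'cV[R]_n := \col_i (if I1 i then u i 0 else w i 0).
have vc : v c 0 = u c 0 by rewrite mxE I1c.
rewrite -vc (@loc1 u v); last by move=> i h; rewrite mxE h.
rewrite (@loc2 w v); last first.
  move=> i h; rewrite mxE; case: ifP => // h1.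
  by rewrite (I12 h1 h).
by rewrite -qfA; case: AP => Ap _; apply: psd_qf.
Qed.


Let ec : 'cV[R]_n := delta_mx c 0.
Lemma ecc : ec c 0 = 1. Proof. by rewrite /ec mxE !eqxx. Qed.
Lemma qf1c : qf A1 ec = 0.
Proof. by rewrite /ec qf_delta mxE; case: ifP => // /and3P [_ _]; rewrite eqxx. Qed.
Lemma qf2c : qf A2 ec = 0.
Proof. by rewrite /ec qf_delta mxE; case: ifP => // /and3P [_ _]; rewrite eqxx. Qed.

Definition S := [set r : R | exists2 u : 'cV[R]_n, u c 0 = 1 & r = - qf A1 u]%classic.
Lemma S0 : S 0.
Proof. by exists ec; rewrite ?ecc // qf1c oppr0. Qed.

Lemma Sub : ubound S al.
Proof.
move=> r [u uc ->]; have := @comb u ec; rewrite uc ecc qf2c expr1n mulr1 addr0.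
by move=> /(_ erefl); lra.
Qed.

Lemma hsS : has_sup S.
Proof. by split; [exists 0; exact: S0 | exists al; exact: Sub]. Qed.

Definition be := sup S.
Lemma be0 : 0 <= be. Proof. exact: (sup_upper_bound hsS S0). Qed.
Lemma beal : be <= al. Proof. by apply: ge_sup; [exists 0; exact: S0|exact: Sub]. Qed.
Lemma beu (u : 'cV[R]_n) : u c 0 = 1 -> - qf A1 u <= be.
Proof. by move=> uc; apply: (sup_upper_bound hsS); exists u. Qed.
Lemma bew (w : 'cV[R]_n) : w c 0 = 1 -> be <= al + qf A2 w.
Proof.
move=> wc; apply: ge_sup; first by exists 0; exact: S0.
move=> r [u uc ->]; have := @comb u w; rewrite uc wc expr1n mulr1.
by move=> /(_ erefl); lra.
Qed.

Lemma qf_homog (M : 'M[R]_n) (v : 'cV[R]_n) (K : R) : v c 0 != 0 ->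
  (forall u : 'cV[R]_n, u c 0 = 1 -> 0 <= qf M u + K) ->
  0 <= qf M v + K * v c 0 ^+ 2.
Proof.
move=> vc H.
have -> : v = v c 0 *: ((v c 0)^-1 *: v) by rewrite scalerA divff // scale1r.
rewrite qfvZ !mxE mulVf // mulr1 [K * _]mulrC -mulrDr.
apply: mulr_ge0; first exact: sqr_ge0.
by apply: H; rewrite mxE mulVf.
Qed.

Lemma A1sym : A1^T = A1.
Proof.
apply/matrixP => i j; rewrite !mxE.
by case: (I1 i); case: (I1 j); case: (i == c); case: (j == c) => //=; exact: Asym.
Qed.
Lemma A2sym : A2^T = A2.
Proof.
apply/matrixP => i j; rewrite !mxE.
by case: (I2 i); case: (I2 j); case: (i == c); case: (j == c) => //=; exact: Asym.
Qed.

Definition B := A1 + be *: delta_mx c c.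
Definition C := A2 + (al - be) *: delta_mx c c.

Lemma psdB : psd B.
Proof.
split; first by rewrite /B linearD linearZ /= A1sym trmx_delta.
move=> v; change (0 <= qf B v); rewrite qfD qfZ qf_deltamx.
have [vc|vc] := eqVneq (v c 0) 0.
  have := @comb v 0; rewrite mxE vc /= qf0v expr0n /= mulr0 !addr0 => /(_ erefl).
  by rewrite mulr0 addr0.
apply: qf_homog => // u uc; have := beu uc; lra.
Qed.

Lemma psdC : psd C.
Proof.
split; first by rewrite /C linearD linearZ /= A2sym trmx_delta.
move=> v; change (0 <= qf C v); rewrite qfD qfZ qf_deltamx.
have [vc|vc] := eqVneq (v c 0) 0.
  have := @comb 0 v; rewrite mxE vc /= qf0v expr0n /= mulr0 !addr0 add0r => /(_ erefl).
  by rewrite mulr0 addr0.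
apply: qf_homog => // u uc; have := bew uc; lra.
Qed.


Lemma PGB1 : PG (res p B).
Proof.
split; first by apply: psd_res; exact: psdB.
move=> x y xy nadj; rewrite resE !mxE.
have pxy : p x != p y by apply: contra_neq xy; apply: pi.
have -> : (p x == c) && (p y == c) = false.
  by apply/negbTE; apply: contra pxy => /andP [/eqP -> /eqP ->].
rewrite mulr0 addr0; case: ifP => // _.
case: AP => _ Apat; apply: Apat => //.
by have [_ pa] := emb_p pi pq adj; rewrite pa.
Qed.

Lemma PGC1 : PG (res q C).
Proof.
split; first by apply: psd_res; exact: psdC.
move=> x y xy nadj; rewrite resE !mxE.
have pxy : q x != q y by apply: contra_neq xy; apply: qi.
have -> : (q x == c) && (q y == c) = false.
  by apply/negbTE; apply: contra pxy => /andP [/eqP -> /eqP ->].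
rewrite mulr0 addr0; case: ifP => // _.
case: AP => _ Apat; apply: Apat => //.
by have [_ qa] := emb_q qi pq adj; rewrite qa.
Qed.

Lemma ext_resB : ext p (res p B) = B.
Proof.
apply: ext_res => // i j H; rewrite !mxE.
have ni : ~~ (I1 i && I1 j).
  by case: H => H; apply/negP => /andP [/existsP [x /eqP px] /existsP [y /eqP py]];
    [move: (H x) | move: (H y)]; rewrite ?px ?py eqxx.
have -> : (i == c) && (j == c) = false.
  apply/negbTE/negP => /andP [/eqP ic /eqP jc]; case/negP: ni.
  by rewrite ic jc I1c.
by rewrite mulr0 addr0 /= andbT (negbTE ni).
Qed.

Lemma ext_resC : ext q (res q C) = C.
Proof.
apply: ext_res => // i j H; rewrite !mxE.
have ni : ~~ (I2 i && I2 j).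
  by case: H => H; apply/negP => /andP [/existsP [x /eqP px] /existsP [y /eqP py]];
    [move: (H x) | move: (H y)]; rewrite ?px ?py eqxx.
have -> : (i == c) && (j == c) = false.
  apply/negbTE/negP => /andP [/eqP ic /eqP jc]; case/negP: ni.
  by rewrite ic jc I2c.
by rewrite mulr0 addr0 /= andbT (negbTE ni).
Qed.

Lemma PGfA : PG (map_mx f A).
Proof.
split; last first.
  by move=> i j ij nadj; rewrite mxE; case: AP => _ Apat; rewrite Apat.
have E : map_mx f A = map_mx f B + map_mx f C +
    (f al - f be - f (al - be)) *: delta_mx c c.
  apply/matrixP => i j; rewrite !mxE.
  case: (boolP ((i == c) && (j == c))) => [/andP [/eqP -> /eqP ->]|nc].
    rewrite !andbF mulr1 !mulr1 !add0r /al; lra.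
  rewrite /= !mulr0 !addr0 !andbT.
  case: ifP => h1; case: ifP => h2.
  - by move/andP: h1 => [a b]; move/andP: h2 => [a' b']; move: nc;
      rewrite (I12 a a') (I12 b b') eqxx.
  - by rewrite f0 addr0.
  - by rewrite f0 add0r.
  - by rewrite crosszero ?h1 ?h2 // f0 addr0.
rewrite E; apply: psdD; first apply: psdD.
- rewrite -ext_resB (map_ext pi _ f0); apply: psd_ext.
  by have [h _] := pr1 PGB1.
- rewrite -ext_resC (map_ext qi _ f0); apply: psd_ext.
  by have [h _] := pr2 PGC1.
- apply: psdZ; last exact: psd_delta.
  have h : 0 <= al - be by rewrite subr_ge0; exact: beal.
  have := sa be0 h; rewrite addrCA subrr addr0; lra.
Qed.

End Dec.

Lemma pres_coal2 (R : realType) (f : R -> R) H1 H2 G : f 0 = 0 ->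
  superadditive_nonneg f -> preserves_positivity f H1 ->
  preserves_positivity f H2 -> coalescence2 H1 H2 G ->
  preserves_positivity f G.
Proof.
move=> f0 sa pr1 pr2 [v1 [v2 [p [q [pi qi pq cov adj]]]]] A AP.
exact: (PGfA f0 sa pr1 pr2 pi qi pq cov adj AP).
Qed.

Section P3.
Variable R : realType.

Definition cv3 (a b c : R) : 'cV[R]_3 := \col_i (nth 0 [:: a; b; c] i).

Lemma psd_rank1 n (w : 'cV[R]_n) : psd (w *m w^T).
Proof.
have := psd_congr w (@psd_delta R 1 0).
have -> : delta_mx 0 0 = 1%:M :> 'M[R]_1.
  by apply/matrixP => i j; rewrite !ord1 !mxE.
by rewrite mulmx1.
Qed.

Definition M4 a b c d := cv3 a b 0 *m (cv3 a b 0)^T + cv3 0 c d *m (cv3 0 c d)^T.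

Lemma M4psd a b c d : psd (M4 a b c d).
Proof. by apply: psdD; apply: psd_rank1. Qed.

Lemma M4PG a b c d : @PG R P3 (M4 a b c d).
Proof.
split; first exact: M4psd.
move=> [[|[|[|i]]] Hi] [[|[|[|j]]] Hj] //= _ _;
  by rewrite !mxE !big_ord1 ?mxE /= ?mxE /=; ring.
Qed.

Lemma M4E a b c d (i j : 'I_3) : M4 a b c d i j =
  nth 0 [:: a; b; 0] i * nth 0 [:: a; b; 0] j + nth 0 [:: 0; c; d] i * nth 0 [:: 0; c; d] j.
Proof. by rewrite !mxE !big_ord1 !mxE. Qed.

Lemma qf3 (M : 'M[R]_3) t0 t1 t2 : qf M (cv3 t0 t1 t2) =
  \sum_(i < 3) \sum_(j < 3) nth 0 [:: t0; t1; t2] i * M i j * nth 0 [:: t0; t1; t2] j.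
Proof. by rewrite qfE; apply: eq_bigr => i _; apply: eq_bigr => j _; rewrite !mxE. Qed.

Variable f : R -> R.
Hypothesis f0 : f 0 = 0.
Hypothesis pr : preserves_positivity f P3.

Lemma keyq a b c d t0 t1 t2 :
  0 <= qf (map_mx f (M4 a b c d)) (cv3 t0 t1 t2).
Proof. by have [h _] := pr (M4PG a b c d); apply: psd_qf. Qed.

Lemma key a b c d t0 t1 t2 : 0 <=
  t0 * f (a * a) * t0 + t0 * f (a * b) * t1 + t1 * f (b * a) * t0 +
  t1 * f (b * b + c * c) * t1 + t1 * f (c * d) * t2 + t2 * f (d * c) * t1 +
  t2 * f (d * d) * t2.
Proof.
have := keyq a b c d t0 t1 t2; rewrite qf3.
rewrite !big_ord_recl !big_ord0 !mxE /= !big_ord1 !mxE /=.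
rewrite !(mulr0, mul0r, addr0, add0r) f0 !(mulr0, mul0r, addr0, add0r).
lra.
Qed.

Lemma sqrtsq (x : R) : 0 <= x -> Num.sqrt x * Num.sqrt x = x.
Proof. by move=> x0; rewrite -expr2 sqr_sqrtr. Qed.

Lemma P3_nn (x : R) : 0 <= x -> 0 <= f x.
Proof.
move=> x0; have := key (Num.sqrt x) 0 0 0 1 0 0; rewrite sqrtsq //.
rewrite !(mulr0, mul0r, addr0, add0r, mul1r, mulr1) ?f0; lra.
Qed.

Lemma P3_sa : superadditive_nonneg f.
Proof.
move=> x y x0 y0; have := key (Num.sqrt x) (Num.sqrt x) (Num.sqrt y) (Num.sqrt y) 1 (-1) 1.
rewrite !sqrtsq //; lra.
Qed.

Lemma quad (P Q S : R) : (forall s t, 0 <= s * P * s + s * Q * t + t * Q * s + t * S * t) ->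
  Q ^+ 2 <= P * S.
Proof.
move=> H; have P0 : 0 <= P by have := H 1 0; lra.
have S0 : 0 <= S by have := H 0 1; lra.
have [Pz|Pp] := eqVneq P 0.
  have [Qz|Qn] := eqVneq Q 0; first by rewrite Qz Pz expr0n mul0r.
  have := H (- (S + 1) / (2 * Q)) 1; rewrite Pz.
  have -> : - (S + 1) / (2 * Q) * 0 * (- (S + 1) / (2 * Q)) +
    - (S + 1) / (2 * Q) * Q * 1 + 1 * Q * (- (S + 1) / (2 * Q)) + 1 * S * 1 = -1 by field.
  lra.
have := H (- Q) P.
have Pp' : 0 < P by rewrite lt_neqAle eq_sym Pp.
have -> : - Q * P * - Q + - Q * Q * P + P * Q * - Q + P * S * P = P * (P * S - Q ^+ 2) by ring.
by rewrite pmulr_rge0 // subr_ge0.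
Qed.

Lemma P3_mc (a b c : R) : 0 <= a -> 0 <= b -> 0 <= c -> b ^+ 2 = a * c ->
  f b ^+ 2 <= f a * f c.
Proof.
move=> a0 b0 c0 e; apply: quad => s t.
have := key (Num.sqrt a) (Num.sqrt c) 0 0 s t 0.
have -> : Num.sqrt a * Num.sqrt c = b by rewrite -sqrtrM // -e sqrtr_sqr ger0_norm.
have -> : Num.sqrt c * Num.sqrt a = b by rewrite -sqrtrM // mulrC -e sqrtr_sqr ger0_norm.
rewrite !sqrtsq // !(mulr0, mul0r, addr0, add0r) ?f0; lra.
Qed.

End P3.

Section ContFile.
Local Open Scope classical_set_scope.

Lemma cont_epsdelta (R : realType) (f : R -> R) :
  (forall x, 0 <= x -> forall e, 0 < e -> exists2 d, 0 < d &
     forall y, 0 <= y -> `|x - y| < d -> `|f x - f y| < e) ->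
  continuous_nonneg f.
Proof.
move=> H; rewrite /continuous_nonneg; apply/subspace_continuousP => x /= x0.
apply/cvgrPdist_lt => e e0.
have [d d0 Hd] := H x x0 e e0.
rewrite near_withinE; near=> y => /= y0.
apply: Hd => //.
Unshelve. all: end_near.
Qed.

Lemma archiN (R : realType) (x : R) : exists N : nat, x < N.+1%:R.
Proof.
have [x0|x0] := leP 0 x; first by exists (Num.truncn x); case/andP: (truncn_itv x0).
by exists 0%N; apply: lt_le_trans x0 _.
Qed.

Lemma bern (R : realType) (h : R) n : 0 <= h -> (1 + h) ^+ n * (1 - n%:R * h) <= 1.
Proof.
move=> h0; elim: n => [|n IH]; first by rewrite expr0 mul0r subr0 mulr1.
rewrite exprS -mulrA; apply: le_trans IH.
have P0 : 0 <= (1 + h) ^+ n by apply: exprn_ge0; lra.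
have n0 : 0 <= n%:R :> R by [].
rewrite -natr1; set P := (1 + h) ^+ n; set N := n%:R.
have N1 : 0 <= N + 1 by lra.
have := mulr_ge0 P0 (mulr_ge0 N1 (sqr_ge0 h)); rewrite -/P; nra.
Qed.

Section Cont.
Variable R : realType.
Variable f : R -> R.
Hypothesis f0 : f 0 = 0.
Hypothesis fnn : forall x, 0 <= x -> 0 <= f x.
Hypothesis sa : superadditive_nonneg f.
Hypothesis mc : forall a b c, 0 <= a -> 0 <= b -> 0 <= c -> b ^+ 2 = a * c ->
  f b ^+ 2 <= f a * f c.

Lemma mono x y : 0 <= x -> x <= y -> f x <= f y.
Proof.
move=> x0 xy; have yx0 : 0 <= y - x by rewrite subr_ge0.
have := sa x0 yx0; have -> : x + (y - x) = y by ring.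
have := fnn yx0; lra.
Qed.

Lemma natmul_le x n : 0 <= x -> f x *+ n <= f (x *+ n).
Proof.
move=> x0; elim: n => [|n IH]; first by rewrite !mulr0n f0.
rewrite !mulrS; apply: le_trans (sa x0 (mulrn_wge0 _ x0)).
by rewrite lerD2l.
Qed.

Lemma cont0 e : 0 < e -> exists2 d, 0 < d &
  forall y, 0 <= y -> `|0 - y| < d -> `|f 0 - f y| < e.
Proof.
move=> e0; have [N HN] := archiN (f 1 / e).
set M : R := N.+1%:R.
have M0 : 0 < M by rewrite ltr0n.
exists M^-1; first by rewrite invr_gt0.
move=> y y0; rewrite sub0r normrN ger0_norm // f0 sub0r normrN.
rewrite ger0_norm ?fnn // => yM.
have yM1 : y *+ N.+1 <= 1.
  rewrite -[y *+ _]mulr_natr -/M; have : y * M < M^-1 * M by rewrite ltr_pM2r.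
  by rewrite mulVf ?gt_eqF // => /ltW.
have h1 := natmul_le N.+1 y0.
have h2 : f (y *+ N.+1) <= f 1 by apply: mono => //; exact: mulrn_wge0.
have h3 : f 1 < e * M by rewrite mulrC -ltr_pdivrMr.
rewrite -[f y *+ _]mulr_natr -/M in h1.
have : f y * M < e * M by apply: le_lt_trans h3; apply: le_trans h2.
by rewrite ltr_pM2r.
Qed.


Lemma zero_all x : 0 < x -> f x = 0 -> forall y, 0 <= y -> f y = 0.
Proof.
move=> x0 fx y y0; have [yx|xy] := leP y x.
  by apply/eqP; rewrite eq_le fnn // andbT -fx; apply: mono.
have c0 : 0 <= y ^+ 2 / x by apply: divr_ge0; [exact: sqr_ge0|exact: ltW].
have := mc (ltW x0) y0 c0; rewrite fx mul0r.
have -> : x * (y ^+ 2 / x) = y ^+ 2 by field; rewrite gt_eqF.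
move=> /(_ erefl) h; apply/eqP; rewrite -sqrf_eq0 eq_le h sqr_ge0 //.
Qed.

Lemma contpos x e : 0 < x -> 0 < f x -> 0 < e -> exists2 d, 0 < d &
  forall y, 0 <= y -> `|x - y| < d -> `|f x - f y| < e.
Proof.
move=> x0 fx0 e0.
set D := f (2 * x) - f x.
have [N HN] := archiN (D / e).
set M : R := N.+1%:R.
have M1 : 1 <= M by rewrite ler1n.
set h := (2 * M)^-1.
have h0 : 0 < h by rewrite invr_gt0; lra.
have h1 : h <= 2^-1 by rewrite /h lef_pV2 ?posrE; lra.
set q := 1 + h.
set F := fun j => f (x * q ^+ j).
have xq j : x <= x * q ^+ j.
  have q1 : 1 <= q by rewrite /q; lra.
  have := exprn_ege1 j q1; nra.
have Fpos j : 0 < F j by apply: lt_le_trans fx0 _; apply: mono (ltW x0) (xq j).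
have F0 : F 0%N = f x by rewrite /F expr0 mulr1.
have mcj j : F j.+1 ^+ 2 <= F j * F j.+2.
  apply: mc; try by apply: le_trans (ltW x0) (xq _).
  by rewrite /F !exprS; ring.
have chain j : F 1%N * F j <= F j.+1 * F 0%N.
  elim: j => [|j IH]; first by rewrite mulrC.
  move: IH; have := mcj j; have := Fpos j; have := Fpos j.+1; have := Fpos j.+2;
  have := Fpos 0%N; have := Fpos 1%N.
  set a := F 0%N; set b := F 1%N; set u := F j; set v := F j.+1; set w := F j.+2.
  move=> b0 a0 w0 v0 u0 m IH.
  have e1 := ler_wpM2r (ltW v0) IH.
  have e2 := ler_wpM2l (ltW a0) m.
  have : u * (b * v) <= u * (w * a) by rewrite expr2 in e2; nra.
  by rewrite ler_pM2l.
have F1 : F 0%N <= F 1%N.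
  rewrite /F expr0 mulr1; apply: mono; [exact: ltW|exact: xq].
set d := F 1%N - F 0%N.
have lin j : F 0%N + j%:R * d <= F j.
  elim: j => [|j IH]; first by rewrite mul0r addr0.
  have := chain j; move: IH; rewrite /d.
  have := Fpos 0%N; have := Fpos 1%N; have := F1.
  set a := F 0%N; set b := F 1%N; set u := F j; set v := F j.+1.
  move=> ab b0 a0 IH ch; rewrite -natr1.
  have n0 : 0 <= j%:R :> R by [].
  have e1 : b * (a + j%:R * (b - a)) <= v * a.
    by apply: le_trans ch; rewrite ler_wpM2l // ltW.
  have e2 : 0 <= j%:R * (b - a) * (b - a) by apply: mulr_ge0; [apply: mulr_ge0|]; lra.
  have : a * (a + (j%:R + 1) * (b - a)) <= a * v by nra.
  by rewrite ler_pM2l.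
have qN : x * q ^+ N.+1 <= 2 * x.
  have := bern N.+1 (ltW h0); rewrite -/q -/M.
  have -> : M * h = 2^-1.
    rewrite /h; have M0 : M != 0 by rewrite gt_eqF //; lra.
    by field.
  have := exprn_ge0 N.+1 (_ : 0 <= q); nra.
have FN : F N.+1 <= f (2 * x).
  apply: mono => //; apply: le_trans (ltW x0) (xq _).
have e0M : D < e * M by rewrite mulrC -ltr_pdivrMr.
have dle : d < e.
  have := lin N.+1; rewrite -/M F0 => hl.
  have : M * d < M * e by rewrite /D in e0M; nra.
  by rewrite ltr_pM2l //; lra.
have q0 : 0 < q by rewrite /q; lra.
set g := f (x / q).
have g0 : 0 <= g by apply: fnn; apply: divr_ge0; lra.
have mcl : f x ^+ 2 <= g * F 1%N.
  rewrite /F expr1; apply: mc; try (by apply: divr_ge0; lra); try nra.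
  by field; rewrite gt_eqF.
have left : f x - g <= d.
  rewrite /d F0; have := Fpos 1%N; nra.
exists (x * h / 2); first by apply: divr_gt0 => //; nra.
move=> y y0; rewrite ltr_distl => /andP [l1 l2].
have yq : y <= x * q by rewrite /q; nra.
have xqy : x / q <= y.
  rewrite ler_pdivrMr //.
  have k1 : 0 <= (y - (x - x * h / 2)) * q by apply: mulr_ge0; lra.
  have k2 : 0 <= x * (h * (1 - h)) by apply: mulr_ge0; [lra|apply: mulr_ge0; lra].
  rewrite /q in k1 *; nra.
have fy1 : f y <= F 1%N by rewrite /F expr1; apply: mono.
have fy2 : g <= f y by apply: mono => //; apply: divr_ge0; lra.
have dd : d = F 1%N - f x by rewrite /d F0.
move: dd dle left fy1 fy2; set F1' := F 1%N; set fx := f x; set fy := f y.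
move=> dd dle left fy1 fy2.
rewrite ltr_distl; apply/andP; split; lra.
Qed.

Lemma cont_main : continuous_nonneg f.
Proof.
apply: cont_epsdelta => x x0 e e0.
have [<-|xpos] := eqVneq 0 x; first exact: cont0.
have xp : 0 < x by rewrite lt_neqAle xpos.
have [fx0|fxp] := eqVneq (f x) 0; last first.
  by apply: contpos => //; rewrite lt_neqAle eq_sym fxp fnn.
exists 1 => // y y0 _; rewrite fx0 (zero_all xp fx0 y0) subrr normr0 //.
Qed.

End Cont.

End ContFile.

Section Pow.
Variable R : realType.

Lemma powR_frac (a t s : R) : 1 <= a -> 0 <= t <= 1 -> 0 <= s ->
  powR (t * s) a <= t * powR s a.
Proof.
move=> a1 /andP [t0 t1] s0.
have [->|tp] := eqVneq t 0.
  have a0 : a != 0 by rewrite gt_eqF //; lra.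
  by rewrite !mul0r powR0.
have tt : 0 < t <= 1 by rewrite t1 andbT lt_def tp t0.
exact: (ge1r_powRZ tt s0 a1).
Qed.

Lemma powR_sa (a x y : R) : 1 <= a -> 0 <= x -> 0 <= y ->
  powR x a + powR y a <= powR (x + y) a.
Proof.
move=> a1 x0 y0; set s := x + y.
have [s0|sp] := eqVneq s 0.
  have x00 : x = 0 by rewrite /s in s0; lra.
  have y00 : y = 0 by rewrite /s in s0; lra.
  have a0 : a != 0 by rewrite gt_eqF //; lra.
  by rewrite x00 y00 s0 powR0 ?addr0.
have sp' : 0 < s by rewrite lt_neqAle eq_sym sp /s addr_ge0.
have hx : powR x a <= x / s * powR s a.
  have -> : x = x / s * s by rewrite divfK.
  rewrite [X in _ <= X / s * _]divfK //; apply: powR_frac => //; last exact: ltW.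
  by rewrite divr_ge0 ?ler_pdivrMr // ?mul1r /s; lra.
have hy : powR y a <= y / s * powR s a.
  have -> : y = y / s * s by rewrite divfK.
  rewrite [X in _ <= X / s * _]divfK //; apply: powR_frac => //; last exact: ltW.
  by rewrite divr_ge0 ?ler_pdivrMr // ?mul1r /s; lra.
have -> : powR s a = x / s * powR s a + y / s * powR s a.
  by rewrite -mulrDl -mulrDl divff ?mul1r.
lra.
Qed.

Lemma powR2 (a : R) : 2 <= powR 2 a -> 1 <= a.
Proof.
rewrite /powR gt_eqF // -{1}[2]lnK ?posrE // ler_expR.
by rewrite -{1}[ln 2]mul1r ler_pM2r // ln_gt0 // ltr1n.
Qed.

Lemma psi0 a : psi a (0 : R) = 0. Proof. by rewrite /psi eqxx. Qed.
Lemma phi0 a : phi a (0 : R) = 0. Proof. by rewrite /phi eqxx. Qed.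

Lemma psi_pos (a x : R) : 1 <= a -> 0 <= x -> psi a x = powR x a.
Proof.
move=> a1 x0; rewrite /psi; have [->|xn] := eqVneq x 0.
  have a0 : a != 0 by rewrite gt_eqF //; lra.
  by rewrite powR0.
have xp : 0 < x by rewrite lt_neqAle eq_sym xn.
by rewrite gtr0_sg // mul1r ger0_norm.
Qed.

Lemma phi_pos (a x : R) : 1 <= a -> 0 <= x -> phi a x = powR x a.
Proof.
move=> a1 x0; rewrite /phi; have [->|xn] := eqVneq x 0.
  have a0 : a != 0 by rewrite gt_eqF //; lra.
  by rewrite powR0.
by rewrite ger0_norm.
Qed.

Lemma psi_pos' (a x : R) : 0 < x -> psi a x = powR x a.
Proof.
move=> xp; rewrite /psi gt_eqF // gtr0_sg // mul1r gtr0_norm //.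
Qed.

Lemma phi_pos' (a x : R) : 0 < x -> phi a x = powR x a.
Proof. by move=> xp; rewrite /phi gt_eqF // gtr0_norm. Qed.

End Pow.

Lemma coal_pres (R : realType) (f : R -> R) Gs i H : coalescence Gs i H ->
  f 0 = 0 -> superadditive_nonneg f ->
  (forall j, (j <= i)%N -> preserves_positivity f (Gs j)) ->
  preserves_positivity f H.
Proof.
move=> c f0 sa; elim: c => [|{}i H' G' cH IH c2] P; first exact: P.
apply: pres_coal2 f0 sa _ _ c2; last exact: P.
by apply: IH => j ji; apply: P; apply: leqW.
Qed.

Lemma coal_inv Gs i G : coalescence Gs i.+1 G ->
  exists H, coalescence Gs i H /\ coalescence2 H (Gs i.+1) G.
Proof. by move=> c; inversion c; subst; eauto. Qed.

Lemma part1 (R : realType) (k : nat) (Gs : nat -> graph) (G : graph) :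
  (1 < k)%N ->
  (forall i, (i < k)%N -> connected_graph (Gs i) /\ has_edge (Gs i)) ->
  coalescence Gs k.-1 G ->
  forall f : R -> R, f 0 = 0 ->
        (preserves_positivity f G <->
         [/\ (forall i, (i < k)%N -> preserves_positivity f (Gs i)),
             continuous_nonneg f & superadditive_nonneg f]).
Proof.
move=> k1 Hk cG f f0.
have kk : k.-1 = (k.-2).+1 by lia.
have [H [cH c2]] : exists H, coalescence Gs k.-2 H /\ coalescence2 H (Gs k.-2.+1) G.
  by apply: coal_inv; rewrite -kk.
have noi j : (j < k)%N -> no_iso (Gs j).
  by move=> jk; have [a b] := Hk j jk; apply: conn_noiso.
have [e3 He3] : exists e, emb P3 G e.
  move: c2 => [v1 [v2 [p [q [pi qi pq cov adj]]]]].
  apply: (coal2_P3 pi qi pq adj).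
    apply: (coal_noiso cH) => j jk; apply: noi.
    by lia.
  by apply: noi; lia.
split.
  move=> pG; split.
  - move=> i ik; have ik' : (i <= k.-1)%N by lia.
    have [e He] := coal_emb cG ik'.
    exact: pres_emb f0 He pG.
  - have pP := pres_emb f0 He3 pG.
    apply: cont_main => //.
    + exact: P3_nn f0 pP.
    + exact: P3_sa f0 pP.
    + exact: P3_mc f0 pP.
  - exact: P3_sa f0 (pres_emb f0 He3 pG).
move=> [P _ sa]; apply: (coal_pres cG f0 sa) => j jk; apply: P.
by lia.
Qed.

Lemma powpart (R : realType) (k : nat) (Gs : nat -> graph) (G : graph)
  (g : R -> R -> R) :
  (forall a, g a 0 = 0) ->
  (forall a x, 1 <= a -> 0 <= x -> g a x = powR x a) ->
  (forall a x, 0 < x -> g a x = powR x a) ->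
  (1 < k)%N ->
  (forall i, (i < k)%N -> connected_graph (Gs i) /\ has_edge (Gs i)) ->
  coalescence Gs k.-1 G ->
  forall a : R, preserves_positivity (g a) G <->
         (1 <= a /\ forall i, (i < k)%N -> preserves_positivity (g a) (Gs i)).
Proof.
move=> g0 gpos gpos' k1 Hk cG a; split.
  move=> /(part1 k1 Hk cG (g0 a)) [P _ sa]; split => //.
  apply: powR2; have := sa 1 1 ler01 ler01.
  by rewrite !gpos' ?ltr01 // powR1 (_ : 1 + 1 = 2) //.
move=> [a1 P]; apply: (coal_pres cG (g0 a)).
  move=> x y x0 y0; rewrite !gpos ?addr_ge0 //; exact: powR_sa.
by move=> j jk; apply: P; lia.
Qed.

Theorem proposition4p11 (R : realType) (k : nat) (Gs : nat -> graph) (G : graph) :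
  (1 < k)%N ->
  (forall i, (i < k)%N -> connected_graph (Gs i) /\ has_edge (Gs i)) ->
  coalescence Gs k.-1 G ->
  [/\ (forall f : R -> R, f 0 = 0 ->
        (preserves_positivity f G <->
         [/\ (forall i, (i < k)%N -> preserves_positivity f (Gs i)),
             continuous_nonneg f & superadditive_nonneg f])),
      (forall a : R, preserves_positivity (psi a) G <->
         (1 <= a /\ forall i, (i < k)%N -> preserves_positivity (psi a) (Gs i))) &
      (forall a : R, preserves_positivity (phi a) G <->
         (1 <= a /\ forall i, (i < k)%N -> preserves_positivity (phi a) (Gs i)))].
Proof.
move=> k1 Hk cG; split.
- exact: part1 k1 Hk cG.
- apply: (powpart (g := @psi R)) => //.
  + exact: psi0.
  + exact: psi_pos.
  + exact: psi_pos'.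
- apply: (powpart (g := @phi R)) => //.
  + exact: phi0.
  + exact: phi_pos.
  + exact: phi_pos'.
Qed.
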